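(* Consider the linear model $Y = X\beta^{0} + \epsilon$ with a fixed design matrix $X\in\mathbb{R}^{n\times p}$, unknown $\beta^{0}\in\mathbb{R}^{p}$, and Gaussian noise $\epsilon\sim\mathcal{N}_{n}(0,\sigma_{0}^{2}I)$. Let $\Omega$ be a norm on $\mathbb{R}^{p}$, $\lambda>0$, and let $\hat\beta$ be a minimizer of $\beta\mapsto \|Y-X\beta\|_{n}^{2}+\lambda\Omega(\beta)$. Let $J$ be a non-trivial allowed set of $\Omega$, $\lambda_J>0$, and let $\hat C_J\in\mathbb{R}^{|J^{c}|\times|J|}$ be a minimizer of $$C\mapsto \|X_J - X_{J^{c}}C\|_{nuc} + \lambda_J\Xi(C),\qquad \Xi(C):=\sum_{j=1}^{|J|}\Omega(C_j).$$ Put $R:=X_J-X_{J^{c}}\hat C_J$ and assume $\|R\|_{nuc}\neq0$, that $\hat\Sigma_J:=R^{T}R/n$ is non-singular and that $T_J:=R^{T}X_J/n$ is invertible. Define $M:=\sqrt{n}\,\hat\Sigma_J^{-1/2}T_J$ and $\hat b_J:=\hat\beta_J+T_J^{-1}R^{T}(Y-X\hat\beta)/n$. Let $S_\star$ be an allowed set of $\Omega$ (in the paper, the oracle set of a sharp oracle inequality) and let $C_{S_\star}$ be a constant such that $\Omega(\beta_{S_\star^{c}})\le C_{S_\star}\,\Omega^{S_\star^{c}}(\beta_{S_\star^{c}})$ for all $\beta\in\mathbb{R}^p$. Then $$M(\hat b_J-\beta^{0}_J)/\sigma_0 = W + rem,$$ where $W\sim\mathcal{N}_{|J|}(0,I)$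 and $\|rem\|_\infty\le 2\sqrt{n}\,\lambda_J\,C_{S_\star}\,\Upsilon_{S_\star}(\hat\beta-\beta^{0})/\sigma_0$.
   Context: For $v\in\mathbb{R}^{n}$, $\|v\|_n^2:=\sum_{j=1}^n v_j^2/n$. For $J\subset\{1,\dots,p\}$ and $\beta\in\mathbb{R}^p$, $\beta_J$ denotes either $(\beta_j)_{j\in J}$ or the vector in $\mathbb{R}^p$ with entries $\beta_j1\{j\in J\}$, depending on context; $X_J$ is the submatrix of columns in $J$. $\|A\|_{nuc}$ is the nuclear norm (sum of singular values). For $C\in\mathbb{R}^{|J^{c}|\times|J|}$, $C_j\in\mathbb{R}^p$ is the $j$-th column of $C$ placed on coordinates $J^{c}$ and zero on $J$. A set $S\subset\{1,\dots,p\}$ is allowed (for $\Omega$) if there is a norm $\Omega^{S^{c}}$ on $\mathbb{R}^{|S^{c}|}$ with $\Omega(\beta_S)+\Omega^{S^{c}}(\beta_{S^{c}})\le\Omega(\beta)$ for all $\beta$; for each allowed $S$ such a norm is fixed and $\Upsilon_S(\beta):=\Omega(\beta_S)+\Omega^{S^{c}}(\beta_{S^{c}})$. *)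

(* Defs.v *)
From HB Require Import structures.
From mathcomp Require Import all_boot all_order all_algebra.
From mathcomp Require Import all_classical all_reals all_analysis.
Set Implicit Arguments. Unset Strict Implicit. Unset Printing Implicit Defensive.
Import Order.TTheory GRing.Theory Num.Theory.
Local Open Scope classical_set_scope.
Local Open Scope ring_scope.

Section Defs.
Context {R : realType}.

Definition is_norm (k : nat) (N : 'cV[R]_k -> R) : Prop :=
  [/\ forall x, 0 <= N x,
      forall x, N x = 0 -> x = 0,
      forall (a : R) x, N (a *: x) = `|a| * N x
    & forall x y, N (x + y) <= N x + N y].

Definition sqnorm_n (n : nat) (v : 'cV[R]_n) : R :=
  (\sum_(j < n) v j 0 ^+ 2) / n%:R.

Definition supnorm (k : nat) (v : 'cV[R]_k) : R :=
  \big[Num.max/0]_(i < k) `|v i 0|.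

(** beta_A as the vector (beta_j)_{j in A}, indexed by the enumeration of A *)
Definition restr (p : nat) (A : {set 'I_p}) (b : 'cV[R]_p) : 'cV[R]_#|A| :=
  \col_(k < #|A|) b (enum_val k) 0.

(** beta_A as the vector of R^p with entries beta_j 1{j in A} *)
Definition projS (p : nat) (A : {set 'I_p}) (b : 'cV[R]_p) : 'cV[R]_p :=
  \col_(i < p) (if i \in A then b i 0 else 0).

Definition ext (p : nat) (A : {set 'I_p}) (v : 'cV[R]_#|A|) : 'cV[R]_p :=
  \col_(i < p) \sum_(k < #|A| | enum_val k == i) v k 0.

Definition subcols (n p : nat) (A : {set 'I_p}) (X : 'M[R]_(n, p)) : 'M[R]_(n, #|A|) :=
  \matrix_(i < n, k < #|A|) X i (enum_val k).

Definition allowed_with (p : nat) (Om : 'cV[R]_p -> R) (S : {set 'I_p})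
  (OmS : 'cV[R]_#|~: S| -> R) : Prop :=
  is_norm OmS /\
  forall b : 'cV[R]_p, Om (projS S b) + OmS (restr (~: S) b) <= Om b.


Definition allowed (p : nat) (Om : 'cV[R]_p -> R) (S : {set 'I_p}) : Prop :=
  exists OmS, @allowed_with p Om S OmS.

Definition Upsilon (p : nat) (Om : 'cV[R]_p -> R) (S : {set 'I_p})
  (OmS : 'cV[R]_#|~: S| -> R) (b : 'cV[R]_p) : R :=
  Om (projS S b) + OmS (restr (~: S) b).


Definition is_psd (k : nat) (A : 'M[R]_k) : Prop :=
  A^T = A /\ forall x : 'cV[R]_k, 0 <= (x^T *m A *m x) 0 0.

(** the positive semidefinite square root A^{1/2} of A (the unique psd S
    with S S = A, when A is psd; 0 otherwise) *)
Definition psd_sqrt (k : nat) (A : 'M[R]_k) : 'M[R]_k :=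
  match pselect (exists S : 'M[R]_k, is_psd S /\ S *m S = A) with
  | left h => projT1 (cid h)
  | right _ => 0
  end.

(** nuclear norm ||A||_nuc = tr((A^T A)^{1/2}) = sum of singular values *)
Definition nucnorm (m k : nat) (A : 'M[R]_(m, k)) : R :=
  \tr (psd_sqrt (A^T *m A)).

(** univariate normal law N(m, v) with variance v >= 0 (point mass if v = 0) *)
Definition normal_law (m v : R) : set R -> \bar R :=
  if v == 0 then \d_m else normal_prob m (Num.sqrt v).

End Defs.

Arguments allowed_with {R p} Om S OmS.
Arguments Upsilon {R p} Om S OmS b.
Arguments restr {R p} A b.
Arguments projS {R p} A b.
Arguments ext {R p} A v.
Arguments subcols {R n p} A X.

(** a random vector Z : T -> R^k is N_k(mu, Sig): every linear combination
    a^T Z is a (measurable) real random variable with law N(a^T mu, a^T Sig a) *)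
Definition gaussian_vector {R : realType} (d : measure_display)
  (T : measurableType d) (P : probability T R) (k : nat)
  (Z : T -> 'cV[R]_k) (mu : 'cV[R]_k) (Sig : 'M[R]_k) : Prop :=
  forall a : 'cV[R]_k,
    measurable_fun setT (fun w => (a^T *m Z w) 0 0) /\
    forall B : set R, measurable B ->
      P ((fun w => (a^T *m Z w) 0 0) @^-1` B) =
      normal_law ((a^T *m mu) 0 0) ((a^T *m Sig *m a) 0 0) B.

(* Main.v *)
Require Import Defs.
From HB Require Import structures.
From mathcomp Require Import all_boot all_order all_algebra.
From mathcomp Require Import all_classical all_reals all_analysis.
From mathcomp Require Import lra ring.
Import Order.TTheory GRing.Theory Num.Theory.
Local Open Scope classical_set_scope.
Local Open Scope ring_scope.

Section Aux.
Context {R : realType}.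

Lemma psd_sqrt_spec (k : nat) (A : 'M[R]_k) :
  psd_sqrt A = 0 \/ (is_psd (psd_sqrt A) /\ psd_sqrt A *m psd_sqrt A = A).
Proof.
rewrite /psd_sqrt; case: pselect => [h|_]; last by left.
right; by case: (cid h) => S [].
Qed.

Lemma psd_quad_tr (k m : nat) (P : 'M[R]_k) (N : 'M[R]_(k, m)) :
  is_psd P -> 0 <= \tr (N^T *m P *m N).
Proof.
move=> [_ HP]; rewrite /mxtrace; apply: sumr_ge0 => i _.
have -> : (N^T *m P *m N) i i = ((col i N)^T *m P *m col i N) 0 0.
  rewrite !mxE; apply: eq_bigr => l _; rewrite !mxE; congr (_ * _).
  by apply: eq_bigr => q _; rewrite !mxE.
exact: HP.
Qed.
End Aux.

Section Aux2.
Context {R : realType}.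

Lemma inv_psd (k : nat) (Y : 'M[R]_k) :
  Y^T = Y -> Y \in unitmx -> is_psd Y -> is_psd (invmx Y).
Proof.
move=> sY uY [_ pY]; split; first by rewrite trmx_inv sY.
move=> x; have := pY (invmx Y *m x).
by rewrite trmx_mul trmx_inv sY -!mulmxA (mulmxA Y) mulmxV // mul1mx.
Qed.

Lemma tangent_tr (k : nat) (Y Z : 'M[R]_k) :
  Y^T = Y -> Y \in unitmx -> is_psd (invmx Y) -> Z^T = Z ->
  2 * (\tr Z) <= \tr Y + \tr (invmx Y *m (Z *m Z)).
Proof.
move=> sY uY pY sZ.
have := @psd_quad_tr _ _ _ _ (Z - Y) pY.
have -> : (Z - Y)^T = Z - Y by rewrite raddfB /= sY sZ.
rewrite mulmxBl !mulmxBr mulmxV // !mulmxBl !mul1mx -(mulmxA Z (invmx Y) Y) mulVmx // mulmx1.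
rewrite !raddfB /=.
have -> : \tr (Z *m invmx Y *m Z) = \tr (invmx Y *m (Z *m Z)).
  by rewrite -mulmxA mxtrace_mulC mulmxA.
set a := \tr (invmx Y *m _); set b := \tr Z; set c := \tr Y.
move=> h.
lra.
Qed.
End Aux2.

Section Aux3.
Context {R : realType}.

Lemma tr_psd_ge0 (k : nat) (Y : 'M[R]_k) : is_psd Y -> 0 <= \tr Y.
Proof.
move=> pY; have := @psd_quad_tr _ _ _ _ (1%:M : 'M[R]_k) pY.
by rewrite trmx1 mul1mx mulmx1.
Qed.

Lemma tr_gram_ge0 (m k : nat) (Y : 'M[R]_k) (A : 'M[R]_(m, k)) :
  is_psd Y -> 0 <= \tr (Y *m (A^T *m A)).
Proof.
move=> pY; rewrite mulmxA mxtrace_mulC mulmxA.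
by have := @psd_quad_tr _ _ _ _ A^T pY; rewrite trmxK.
Qed.

Lemma nuc_tangent (m k : nat) (A : 'M[R]_(m, k)) (Y : 'M[R]_k) :
  Y^T = Y -> Y \in unitmx -> is_psd Y -> is_psd (invmx Y) ->
  2 * nucnorm A <= \tr Y + \tr (invmx Y *m (A^T *m A)).
Proof.
move=> sY uY pY piY; rewrite /nucnorm.
case: (@psd_sqrt_spec _ _ (A^T *m A)) => [->|[[sS _] eS]].
  by rewrite mxtrace0 mulr0; apply: addr_ge0; [exact: tr_psd_ge0 | exact: tr_gram_ge0].
by have := @tangent_tr _ _ _ _ sY uY piY sS; rewrite eS.
Qed.
End Aux3.

Section Aux4.
Context {R : realType}.

Lemma restrB (p : nat) (A : {set 'I_p}) (b c : 'cV[R]_p) :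
  restr A (b - c) = restr A b - restr A c.
Proof. by apply/matrixP => i j; rewrite !mxE. Qed.

Lemma extD (p : nat) (A : {set 'I_p}) (u v : 'cV[R]_#|A|) :
  ext A (u + v) = ext A u + ext A v.
Proof. by apply/matrixP => i j; rewrite !mxE -big_split; apply: eq_bigr => k _; rewrite mxE. Qed.

Lemma extZ (p : nat) (A : {set 'I_p}) (a : R) (u : 'cV[R]_#|A|) :
  ext A (a *: u) = a *: ext A u.
Proof. by apply/matrixP => i j; rewrite !mxE mulr_sumr; apply: eq_bigr => k _; rewrite mxE. Qed.

Lemma ext0 (p : nat) (A : {set 'I_p}) : ext A (0 : 'cV[R]_#|A|) = 0.
Proof. by apply/matrixP => i j; rewrite !mxE big1 // => k _; rewrite mxE. Qed.

Lemma ext_restr (p : nat) (A : {set 'I_p}) (b : 'cV[R]_p) :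
  ext A (restr A b) = projS A b.
Proof.
apply/matrixP => i j; rewrite !mxE.
under eq_bigr => k _ do rewrite mxE.
rewrite -(big_enum_val_cond (A := mem A) (fun x => x == i) (fun x => b x 0)).
case: (boolP (i \in A)) => iA.
  rewrite (bigD1 i) ?iA ?eqxx //= big1 ?addr0 // => x /andP[/andP[_ /eqP ->]].
  by rewrite eqxx.
by rewrite big1 // => x /andP[xA /eqP xi]; move: iA; rewrite -xi xA.
Qed.

Lemma projS_split (p : nat) (A : {set 'I_p}) (b : 'cV[R]_p) :
  projS A b + projS (~: A) b = b.
Proof.
apply/matrixP => i j; rewrite !mxE inE (ord1 j).
by case: (i \in A) => /=; rewrite ?addr0 ?add0r.
Qed.

Lemma mulmx_split (n p : nat) (A : {set 'I_p}) (X : 'M[R]_(n, p)) (b : 'cV[R]_p) :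
  X *m b = subcols A X *m restr A b + subcols (~: A) X *m restr (~: A) b.
Proof.
apply/matrixP => i j; rewrite (ord1 j) !mxE (bigID (fun l => l \in A)) /=.
congr (_ + _).
  rewrite (big_enum_val (A := mem A) (fun l => X i l * b l 0)).
  by apply: eq_bigr => k _; rewrite !mxE.
rewrite (eq_bigl (fun l => l \in ~: A)); last by move=> l; rewrite inE.
rewrite (big_enum_val (A := mem (~: A)) (fun l => X i l * b l 0)).
by apply: eq_bigr => k _; rewrite !mxE.
Qed.

Lemma supnorm_le (k : nat) (v : 'cV[R]_k) (B : R) :
  0 <= B -> (forall i, `|v i 0| <= B) -> supnorm v <= B.
Proof.
move=> B0 hv; rewrite /supnorm.
apply: (big_ind (fun y => y <= B)) => //.
by move=> x y hx hy; rewrite ge_max hx hy.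
Qed.

Lemma scal_lem (g h c : R) : 0 <= h ->
  (forall t, 0 < t -> t * g <= t ^+ 2 * h + t * c) -> g <= c.
Proof.
move=> h0 H; apply/ler_addgt0Pr => e e0.
set t := e / (h + 1).
have h1 : 0 < h + 1 by lra.
have t0 : 0 < t by rewrite divr_gt0.
have ht : t * (h + 1) = e by rewrite /t mulfVK // gt_eqF.
have := H t t0.
rewrite expr2 -mulrA -mulrDr ler_pM2l //.
have : t * h <= e by nra.
lra.
Qed.

Section Norm.
Variables (p : nat) (Om : 'cV[R]_p -> R).
Hypothesis hOm : is_norm Om.

Lemma Om0 : Om 0 = 0.
Proof. by case: hOm => _ _ hZ _; rewrite -(scale0r (0 : 'cV[R]_p)) hZ normr0 mul0r. Qed.

Lemma OmN x : Om (- x) = Om x.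
Proof. by case: hOm => _ _ hZ _; rewrite -scaleN1r hZ normrN1 mul1r. Qed.

Lemma Om_ge0 x : 0 <= Om x.
Proof. by case: hOm. Qed.

Lemma OmD x y : Om (x + y) <= Om x + Om y.
Proof. by case: hOm. Qed.

Lemma OmB x y : Om (x - y) <= Om x + Om y.
Proof. by rewrite -(OmN y) OmD. Qed.

Lemma OmZ a x : Om (a *: x) = `|a| * Om x.
Proof. by case: hOm. Qed.
End Norm.
End Aux4.

Section Aux5.
Context {R : realType}.

Lemma psd_sqrt_exists (k : nat) (A : 'M[R]_k) :
  (exists S, is_psd S /\ S *m S = A) ->
  is_psd (psd_sqrt A) /\ psd_sqrt A *m psd_sqrt A = A.
Proof.
move=> h; rewrite /psd_sqrt; case: pselect => [h'|//].
by case: (cid h') => S [].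
Qed.

Lemma psd_scale (k : nat) (c : R) (Y : 'M[R]_k) :
  0 <= c -> is_psd Y -> is_psd (c *: Y).
Proof.
move=> c0 [sY pY]; split; first by rewrite linearZ /= sY.
move=> x; rewrite -scalemxAr -scalemxAl mxE; exact: mulr_ge0.
Qed.
End Aux5.

Section Aux6.
Context {R : realType}.
Lemma expand_tr (m k : nat) (A F : 'M[R]_(m, k)) (Z : 'M[R]_k) (t : R) :
  Z^T = Z ->
  \tr (invmx Z *m ((A - t *: F)^T *m (A - t *: F))) =
  \tr (invmx Z *m (A^T *m A)) - 2 * (t * \tr (invmx Z *m (A^T *m F)))
  + t ^+ 2 * \tr (invmx Z *m (F^T *m F)).
Proof.
move=> sZ.
have gT : \tr (invmx Z *m (F^T *m A)) = \tr (invmx Z *m (A^T *m F)).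
  rewrite -mxtrace_tr !trmx_mul trmxK trmx_inv sZ.
  by rewrite mxtrace_mulC mulmxA.
have -> : (A - t *: F)^T = A^T - t *: F^T by apply/matrixP => a b; rewrite !mxE.
rewrite mulmxBl !mulmxBr -!scalemxAl -!scalemxAr scalerA -expr2.
rewrite !raddfB /= !linearZ /= gT /GRing.scale /=.
set a := \tr (invmx Z *m (A^T *m A)).
set b := \tr (invmx Z *m (A^T *m F)).
set c := \tr (invmx Z *m (F^T *m F)).
lra.
Qed.
End Aux6.

Lemma zmod_e (V : zmodType) (a b c : V) : a + (b - (a + c)) - b = - c.
Proof. by rewrite addrCA [LHS]addrC addKr opprD addrA subrr add0r. Qed.

Theorem theorem2 (R : realType) (d : measure_display) (T : measurableType d)
  (P : probability T R) (n p : nat) (X : 'M[R]_(n, p)) (beta0 : 'cV[R]_p)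
  (sigma0 : R) (eps : T -> 'cV[R]_n) (Y : T -> 'cV[R]_n)
  (Om : 'cV[R]_p -> R) (lam : R) (betahat : T -> 'cV[R]_p)
  (J : {set 'I_p}) (lamJ : R) (Chat : 'M[R]_(#|~: J|, #|J|))
  (Sstar : {set 'I_p}) (OmSc : 'cV[R]_#|~: Sstar| -> R) (CS : R) :
  (0 < n)%N -> 0 < sigma0 ->
  gaussian_vector P eps 0 (sigma0 ^+ 2 *: 1%:M) ->
  (forall w, Y w = X *m beta0 + eps w) ->
  is_norm Om -> 0 < lam ->
  (forall w (b : 'cV[R]_p),
      sqnorm_n (Y w - X *m betahat w) + lam * Om (betahat w)
      <= sqnorm_n (Y w - X *m b) + lam * Om b) ->
  J != finset.set0 -> J != finset.setT -> allowed Om J -> 0 < lamJ ->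
  (let Xi (C : 'M[R]_(#|~: J|, #|J|)) :=
     \sum_(j < #|J|) Om (ext (~: J) (col j C)) in
   forall C : 'M[R]_(#|~: J|, #|J|),
     nucnorm (subcols J X - subcols (~: J) X *m Chat) + lamJ * Xi Chat
     <= nucnorm (subcols J X - subcols (~: J) X *m C) + lamJ * Xi C) ->
  let Rm := subcols J X - subcols (~: J) X *m Chat in
  nucnorm Rm != 0 ->
  let Sig := n%:R^-1 *: (Rm^T *m Rm) in
  Sig \in unitmx ->
  let TJ := n%:R^-1 *: (Rm^T *m subcols J X) in
  TJ \in unitmx ->
  let M := Num.sqrt n%:R *: (invmx (psd_sqrt Sig) *m TJ) in
  let bhat (w : T) := restr J (betahat w)
     + invmx TJ *m (n%:R^-1 *: (Rm^T *m (Y w - X *m betahat w))) in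
  allowed_with Om Sstar OmSc ->
  1 <= CS ->
  (forall b : 'cV[R]_p,
      Om (projS (~: Sstar) b) <= CS * OmSc (restr (~: Sstar) b)) ->
  exists W : T -> 'cV[R]_#|J|,
    gaussian_vector P W 0 1%:M /\
    forall w : T,
      supnorm (sigma0^-1 *: (M *m (bhat w - restr J beta0)) - W w)
      <= 2 * Num.sqrt n%:R * lamJ * CS
           * Upsilon Om Sstar OmSc (betahat w - beta0) / sigma0.
Proof.
Proof.
move=> n0 s0 Geps HY hOm lam0 Hopt J0 JT HJ lamJ0 KKT Rm nucR Sig uSig TJ uTJ M bhat
  [hOmS allS] CS1 hCS.
have nR0 : (0 : R) < n%:R by rewrite ltr0n.
have sn0 : 0 < Num.sqrt (n%:R : R) by rewrite sqrtr_gt0.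
have snn : Num.sqrt (n%:R : R) * Num.sqrt n%:R = n%:R.
  by rewrite -expr2 sqr_sqrtr // ltW.
set Q0 := Rm^T *m Rm.
have uQ0 : Q0 \in unitmx.
  by move: uSig; rewrite /Sig unitmxZ // unitfE invr_eq0 gt_eqF.
set Y0 := psd_sqrt Q0.
have [[sY0 pY0] eY0] : is_psd Y0 /\ Y0 *m Y0 = Q0.
  case: (@psd_sqrt_spec _ _ Q0) => // h.
  by exfalso; move/eqP: nucR; apply; rewrite /nucnorm -/Q0 h mxtrace0.
have uY0 : Y0 \in unitmx by move: uQ0; rewrite -eY0 unitmx_mul => /andP[].
have sY0' : Y0^T = Y0 by [].
set sn := Num.sqrt (n%:R : R).
have sn_u : sn \is a GRing.unit by rewrite unitfE gt_eqF.
set S := psd_sqrt Sig.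
have [[sS pS] eS] : is_psd S /\ S *m S = Sig.
  apply: psd_sqrt_exists; exists (sn^-1 *: Y0); split.
    by apply: psd_scale => //; rewrite invr_ge0 ltW.
  rewrite -scalemxAl -scalemxAr scalerA eY0 /Sig -invfM snn //.
have uS : S \in unitmx by move: uSig; rewrite -eS unitmx_mul => /andP[].
set Z := sn *: S.
have sZ : Z^T = Z by rewrite /Z linearZ /= sS.
have pZ : is_psd Z by apply: psd_scale => //; rewrite ltW.
have uZ : Z \in unitmx by rewrite /Z unitmxZ.
have eZ : Z *m Z = Q0.
  rewrite /Z -scalemxAl -scalemxAr scalerA eS /Sig scalerA snn mulfV ?scale1r //.
  by rewrite gt_eqF.
have piZ : is_psd (invmx Z) by apply: inv_psd.
have piY0 : is_psd (invmx Y0) by apply: inv_psd.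
have trZY : \tr Z <= nucnorm Rm.
  have := @tangent_tr _ _ _ _ sY0 uY0 piY0 sZ.
  rewrite eZ -eY0 mulKmx // /nucnorm -/Q0 -/Y0; lra.
have Om0' := @Om0 _ _ _ hOm; have OmD' := @OmD _ _ _ hOm.
have OmZ' := @OmZ _ _ _ hOm; have OmB' := @OmB _ _ _ hOm.
have Omge0 := @Om_ge0 _ _ _ hOm.
pose Xi (C : 'M[R]_(#|~: J|, #|J|)) := \sum_(k < #|J|) Om (ext (~: J) (col k C)).
have KKT' : forall C, nucnorm Rm + lamJ * Xi Chat
    <= nucnorm (subcols J X - subcols (~: J) X *m C) + lamJ * Xi C := KKT.
set G := invmx Z *m Rm^T *m subcols (~: J) X.
have kkt : forall (j : 'I_#|J|) (v : 'cV[R]_#|~: J|),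
    `|(G *m v) j 0| <= lamJ * Om (ext (~: J) v).
  move=> j v.
  pose D := v *m (delta_mx 0 j : 'M[R]_(1, #|J|)).
  pose F := subcols (~: J) X *m D.
  pose om := Om (ext (~: J) v).
  have colD : forall k, col k D = (k == j)%:R *: v.
    move=> k; apply/matrixP => a b; rewrite !mxE big_ord1 !mxE (ord1 b) eqxx /=.
    by rewrite eq_sym mulrC.
  have XiD : Xi D = om.
    rewrite /Xi (bigD1 j) //= colD eqxx scale1r big1 ?addr0 // => k /negbTE kj.
    by rewrite colD kj scale0r ext0 Om0'.
  have XiCt : forall t, Xi (Chat + t *: D) <= Xi Chat + `|t| * om.
    move=> t; rewrite -XiD /Xi mulr_sumr -big_split /=; apply: ler_sum => k _.
    have -> : col k (Chat + t *: D) = col k Chat + t *: col k D.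
      by apply/matrixP => a b; rewrite !mxE.
    by rewrite extD extZ (le_trans (OmD' _ _)) // OmZ'.
  pose g := \tr (invmx Z *m (Rm^T *m F)).
  pose h := \tr (invmx Z *m (F^T *m F)).
  have h0 : 0 <= h by apply: tr_gram_ge0.
  have gE : g = (G *m v) j 0.
    rewrite /g /F /D /G !mulmxA mxtrace_mulC trace_mx11 -rowE mxE.
    by [].
  have eRt : forall t, subcols J X - subcols (~: J) X *m (Chat + t *: D) = Rm - t *: F.
    move=> t; rewrite /Rm /F mulmxDr -scalemxAr opprD addrA //.
  have gT : \tr (invmx Z *m (F^T *m Rm)) = g.
    rewrite /g -mxtrace_tr !trmx_mul trmxK trmx_inv sZ.
    by rewrite !trmxK mxtrace_mulC.
  have nucT : forall t, 2 * nucnorm (Rm - t *: F) <= 2 * \tr Z - 2 * (t * g) + t ^+ 2 * h.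
    move=> t; have := @nuc_tangent _ _ _ (Rm - t *: F) Z sZ uZ pZ piZ.
    rewrite (@expand_tr _ _ _ Rm F Z t sZ) -/g -/h -/Q0 -eZ mulKmx //.
    lra.
  have key : forall t, 2 * (t * g) <= t ^+ 2 * h + 2 * (lamJ * om) * `|t|.
    move=> t; have k1 := KKT' (Chat + t *: D); rewrite eRt in k1.
    have k2 := nucT t; have k3 := XiCt t.
    have k4 : lamJ * Xi (Chat + t *: D) <= lamJ * (Xi Chat + `|t| * om).
      by rewrite ler_pM2l.
    rewrite mulrDr in k4.
    have e5 : lamJ * (`|t| * om) = (lamJ * om) * `|t| by rewrite mulrCA mulrC.
    lra.
  have gle : g <= lamJ * om.
    apply: (@scal_lem _ g h (lamJ * om) h0) => t t0; have := key t; rewrite gtr0_norm //.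
    have := mulr_ge0 (sqr_ge0 t) h0.
    lra.
  have gge : - g <= lamJ * om.
    apply: (@scal_lem _ (- g) h (lamJ * om) h0) => t t0; have := key (- t); rewrite normrN gtr0_norm // sqrrN.
    have := mulr_ge0 (sqr_ge0 t) h0.
    lra.
  by rewrite -gE -/om ler_norml; apply/andP; split; lra.
have E1 : M *m invmx TJ = n%:R *: invmx Z.
  rewrite /M -scalemxAl mulmxK // /Z invmxZ ?unitmxZ // scalerA; congr (_ *: _).
  rewrite -[X in _ = X / _]snn mulfK //.
  by rewrite gt_eqF.
have E2 : forall v : 'cV[R]_n,
    M *m (invmx TJ *m (n%:R^-1 *: (Rm^T *m v))) = invmx Z *m (Rm^T *m v).
  move=> v; rewrite mulmxA E1 -scalemxAl -scalemxAr scalerA mulfV ?scale1r //.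
  by rewrite gt_eqF.
have E3 : invmx Z *m Rm^T *m subcols J X = M.
  have -> : M = M *m invmx TJ *m TJ by rewrite mulmxKV.
  rewrite E1 -mulmxA /TJ -scalemxAl -scalemxAr scalerA mulfV ?scale1r //.
  by rewrite gt_eqF.
set K := sigma0^-1 *: (invmx Z *m Rm^T).
have main : forall w, sigma0^-1 *: (M *m (bhat w - restr J beta0)) - K *m eps w
    = - (sigma0^-1 *: (G *m restr (~: J) (betahat w - beta0))).
  move=> w; set dl := betahat w - beta0.
  have eY : Y w - X *m betahat w = eps w - X *m dl.
    by rewrite HY /dl mulmxBr opprB addrAC addrC.
  have eb : bhat w - restr J beta0
      = restr J dl + invmx TJ *m (n%:R^-1 *: (Rm^T *m (eps w - X *m dl))).
    by rewrite /bhat eY addrAC -restrB.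
  rewrite eb mulmxDr E2 (@mulmx_split _ _ _ J X dl) (mulmxBr Rm^T (eps w)) (mulmxDr Rm^T).
  rewrite (mulmxBr (invmx Z)) (mulmxDr (invmx Z)) !mulmxA E3.
  by rewrite /K -scalemxAl -scalerBr zmod_e scalerN.
have hKK : K *m K^T = (sigma0^-1 * sigma0^-1) *: 1%:M.
  rewrite /K linearZ /= trmx_mul trmxK trmx_inv sZ -scalemxAl -scalemxAr scalerA.
  by rewrite !mulmxA -(mulmxA _ Rm^T) -/Q0 -eZ !mulmxA mulVmx // mul1mx mulmxV.
have sn1 : 1 <= sn.
  apply: (le_trans _ (_ : Num.sqrt 1 <= sn)); first by rewrite sqrtr1.
  by rewrite ler_sqrt ?ler1n // ltW.
case: HJ => OmJ [[OmJ0 _ _ _] allJ].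
have OmSc0 : forall x, 0 <= OmSc x by case: hOmS.
exists (fun w => K *m eps w); split.
  move=> a; set b := K^T *m a.
  have ef : (fun w => (a^T *m (K *m eps w)) 0 0) = (fun w => (b^T *m eps w) 0 0).
    by apply: funext => w; rewrite /b trmx_mul trmxK mulmxA.
  have [mb lb] := Geps b.
  split; first by rewrite ef.
  move=> B mB; rewrite ef lb; last exact: mB.
  have -> : (b^T *m (0 : 'cV[R]_n)) 0 0 = (a^T *m (0 : 'cV[R]_#|J|)) 0 0.
    by rewrite !mxE !big1 // => i _; rewrite !mxE mulr0.
  suff -> : (b^T *m (sigma0 ^+ 2 *: 1%:M) *m b) 0 0 = (a^T *m 1%:M *m a) 0 0 by [].
  rewrite -scalemxAr mulmx1 -scalemxAl /b trmx_mul trmxK !mulmxA mulmx1 -(mulmxA _ K) hKK.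
  rewrite -scalemxAr -scalemxAl mulmx1 scalerA mxE -expr2 -exprMn mulfV ?gt_eqF //.
  by rewrite expr1n mul1r.
move=> w; rewrite main; set dl := betahat w - beta0.
set U := Upsilon Om Sstar OmSc dl.
have U0 : 0 <= U by rewrite /U /Upsilon addr_ge0.
have h2 : Om (ext (~: J) (restr (~: J) dl)) <= 2 * Om dl.
  rewrite ext_restr.
  have -> : projS (~: J) dl = dl - projS J dl.
    by rewrite -{2}(@projS_split _ _ J dl) addrAC subrr add0r.
  have := OmB' dl (projS J dl); have := allJ dl; have := OmJ0 (restr (~: J) dl).
  lra.
have h3 : Om dl <= CS * U.
  have e : dl = projS Sstar dl + projS (~: Sstar) dl by rewrite projS_split.
  have := OmD' (projS Sstar dl) (projS (~: Sstar) dl); rewrite -e => h.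
  have := hCS dl; have := Omge0 (projS Sstar dl).
  have h4 : 0 <= CS - 1 by rewrite subr_ge0.
  have := mulr_ge0 (Omge0 (projS Sstar dl)) h4.
  rewrite /U /Upsilon; nra.
have s0' : 0 < sigma0^-1 by rewrite invr_gt0.
apply: supnorm_le.
  rewrite /U; apply: divr_ge0; last exact: ltW.
  have := ltW sn0; have := ltW lamJ0; have := le_trans ler01 CS1 => ? ? ?.
  by rewrite !mulr_ge0.
move=> i; rewrite mxE normrN mxE normrM gtr0_norm //.
have h1 := kkt i (restr (~: J) dl).
have hO := Omge0 dl.
have B1 : `|(G *m restr (~: J) dl) i 0| <= lamJ * (2 * (CS * U)).
  apply: (le_trans h1); rewrite ler_pM2l //; apply: (le_trans h2).
  by rewrite ler_pM2l.
have B0 : 0 <= lamJ * (2 * (CS * U)).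
  have := ltW lamJ0; have := le_trans ler01 CS1 => ? ?.
  by rewrite !mulr_ge0.
have -> : 2 * sn * lamJ * CS * U / sigma0 = sigma0^-1 * (sn * (lamJ * (2 * (CS * U)))).
  by rewrite /U; ring.
rewrite ler_pM2l //.
apply: (le_trans B1); rewrite ler_peMl //.
Qed.
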